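(* Let $\sigma=\langle\mathcal V,\mathcal C,S,B\rangle$ be an approval-based multi-winner election. Fix any run of ODH on $\sigma$ (any tie-breaking), and for $i=0,\dots,S-1$ let $\mathcal C_e^i$ be the set of the first $i$ candidates it chooses ($\mathcal C_e^0=\emptyset$). Let $c\in\mathcal C\setminus\mathcal C_e^i$, and let $\{y_1,\dots,y_n\}\subseteq2^{\mathcal C}$ be such that $c\in y_j$ for every $j=1,\dots,n$. Then $$\mathrm{maxMin}(\sigma,\mathcal C_e^i\cup\{c\})\ \ge\ \frac{\sum_{j=1}^nB(y_j)}{\big|\mathcal C_e^i\cap\bigcup_{j=1}^ny_j\big|+1}.$$
   Context: An approval-based multi-winner election is a tuple $\sigma=\langle \mathcal V,\mathcal C,S,B\rangle$, where $\mathcal V$ is a finite set of agents, $\mathcal C$ is a finite set of candidates, $1\le S\le|\mathcal C|$ is an integer, and $B:2^{\mathcal C}\to\mathbb N$ gives, for each $\mathcal A\subseteq\mathcal C$, the number $B(\mathcal A)$ of agents whose ballot is exactly $\mathcal A$ (with $\sum_{\mathcal A}B(\mathcal A)\le|\mathcal V|$). For a non-empty $\mathcal A\subseteq\mathcal C$, the family $\mathfrak F_{\sigma,\mathcal A}$ is the set of all $F:2^{\mathcal C}\times\mathcal A\to\mathbb R$ such that: - $F(y,c)\ge0$ for all $y$ and $c$; - $F(y,c)=0$ if $c\notin y$; - $\sum_{c\in\mathcal A\cap y}F(y,c)=B(y)$ whenever $y\cap\mathcal A\neq\emptyset$. We write $\mathrm{Supp}_F(c)=\sum_yF(y,c)$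 and $\mathrm{maxMin}(\sigma,\mathcal A)=\sup_{F\in\mathfrak F_{\sigma,\mathcal A}}\min_{c\in\mathcal A}\mathrm{Supp}_F(c)$. We also write $\mathfrak F^{\mathrm{opt}}_{\sigma,\mathcal A}=\{F\in\mathfrak F_{\sigma,\mathcal A}:\mathrm{Supp}_F(c)\ge\mathrm{maxMin}(\sigma,\mathcal A)\ \forall c\in\mathcal A\}$. The Open D'Hondt (ODH) rule proceeds as follows. Start with $\mathcal C_e=\emptyset$ and repeat $S$ times: - for each $c\in\mathcal C\setminus\mathcal C_e$, choose any $F\in\mathfrak F^{\mathrm{opt}}_{\sigma,\mathcal C_e\cup\{c\}}$ and set $s_c=\mathrm{Supp}_F(c)$; - then add to $\mathcal C_e$ some $w$ maximizing $s_w$ (ties broken arbitrarily). Finally, output $\mathcal C_e$. *)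

(* Defs.v *)
From Stdlib Require Import Reals ClassicalEpsilon.
From mathcomp Require Import all_boot.
Set Implicit Arguments. Unset Strict Implicit. Unset Printing Implicit Defensive.

Section ODH.
Variable C : finType.

Definition Supp (F : {set C} -> C -> R) (c : C) : R :=
  \big[Rplus/R0]_y F y c.

(* F belongs to the family F_{sigma,A}.  F is given as a function on
   2^C x C, but only its values at candidates c \in A are constrained/used. *)
Definition inFam (B : {set C} -> nat) (A : {set C}) (F : {set C} -> C -> R) : Prop :=
  (forall (y : {set C}) (c : C), c \in A -> Rle R0 (F y c)) /\
  (forall (y : {set C}) (c : C), c \in A -> c \notin y -> F y c = R0) /\
  (forall y : {set C}, (A :&: y) != set0 ->
     \big[Rplus/R0]_(c in A :&: y) F y c = INR (B y)).

(* Supremum of a set of reals (the least upper bound, chosen classically;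
   it exists for all sets used below). *)
Definition Rsup (E : R -> Prop) : R := epsilon (inhabits R0) (fun m => is_lub E m).

(* maxMin(sigma, A) = sup_{F in F_{sigma,A}} min_{c in A} Supp_F(c). *)
Definition maxMin (B : {set C} -> nat) (A : {set C}) : R :=
  Rsup (fun m => exists F, inFam B A F /\
          (exists2 c, c \in A & m = Supp F c) /\
          (forall c, c \in A -> Rle m (Supp F c))).

Definition inFamOpt (B : {set C} -> nat) (A : {set C}) (F : {set C} -> C -> R) : Prop :=
  inFam B A F /\ forall c, c \in A -> Rle (maxMin B A) (Supp F c).

Definition Ce (ws : seq C) (i : nat) : {set C} := [set x | x \in take i ws].

(* ws is the sequence of winners (in order of selection) of a run of ODH with
   S seats: at each round i, for each remaining candidate c some F in
   F_opt_{sigma, Ce_i U {c}} is chosen, s_c := Supp_F(c), and the i-th winner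
   maximizes s among remaining candidates. *)
Definition ODH_run (B : {set C} -> nat) (S : nat) (ws : seq C) : Prop :=
  size ws = S /\
  forall i, (i < S)%N ->
    exists s : C -> R,
      (forall c, c \notin Ce ws i ->
         exists F, inFamOpt B (c |: Ce ws i) F /\ s c = Supp F c) /\
      forall w0 : C, let w := nth w0 ws i in
        w \notin Ce ws i /\
        (forall c, c \notin Ce ws i -> Rle (s c) (s w)).
End ODH.

(* Main.v *)
Require Import Defs.
From Stdlib Require Import Reals Lra ClassicalEpsilon Classical.
From HB Require Import structures.
From mathcomp Require Import all_boot.
Set Implicit Arguments. Unset Strict Implicit. Unset Printing Implicit Defensive.
Lemma RplusA : associative Rplus. Proof. by move=> *; rewrite Rplus_assoc. Qed.
HB.instance Definition _ := Monoid.isComLaw.Build R R0 Rplus RplusA Rplus_comm Rplus_0_l.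
Open Scope R_scope.

Lemma sumR_ge0 (I : finType) (P : pred I) (f : I -> R) :
  (forall i, P i -> 0 <= f i) -> 0 <= \big[Rplus/R0]_(i | P i) f i.
Proof. move=> h; apply: (big_ind (fun x => 0 <= x)) => //; [lra|move=> *; lra]. Qed.

Lemma sumR_le (I : finType) (P : pred I) (f g : I -> R) :
  (forall i, P i -> f i <= g i) ->
  \big[Rplus/R0]_(i | P i) f i <= \big[Rplus/R0]_(i | P i) g i.
Proof. move=> h; apply: (big_ind2 (fun x y => x <= y)) => //; [lra|move=> *; lra]. Qed.

Lemma sumR_sub (I : finType) (P Q : pred I) (f : I -> R) :
  (forall i, P i -> Q i) -> (forall i, Q i -> 0 <= f i) ->
  \big[Rplus/R0]_(i | P i) f i <= \big[Rplus/R0]_(i | Q i) f i.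
Proof.
move=> hPQ h0; rewrite [X in _ <= X](bigID P) /=.
have -> : \big[Rplus/R0]_(i | Q i && P i) f i = \big[Rplus/R0]_(i | P i) f i.
  apply: eq_bigl => i; case hP: (P i); rewrite ?andbT ?andbF //; exact: hPQ.
have : 0 <= \big[Rplus/R0]_(i | Q i && ~~ P i) f i.
  apply: sumR_ge0 => i /andP [] /h0 //.
lra.
Qed.

Lemma sumR_const (I : finType) (D : {set I}) (a : R) :
  \big[Rplus/R0]_(i in D) a = a * INR #|D|.
Proof.
rewrite big_const; elim: #|D| => [|n IH]; first by rewrite /=; ring.
rewrite S_INR Rmult_plus_distr_l -IH /=; ring.
Qed.

Lemma sumR_INR (I : finType) (P : pred I) (f : I -> nat) :
  INR (\sum_(i | P i) f i)%N = \big[Rplus/R0]_(i | P i) INR (f i).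
Proof. apply: (big_morph INR) => //; exact: plus_INR. Qed.

Lemma sumR_pred1 (I : finType) (P : pred I) (j : I) (f : I -> R) :
  P j -> \big[Rplus/R0]_(i | P i) (if i == j then f i else 0) = f j.
Proof.
move=> hj; rewrite (bigD1 j) //= eqxx big1 ?Rplus_0_r //.
by move=> i /andP [_ /negbTE ->].
Qed.

Lemma exists_min (T : eqType) (f : T -> R) (s : seq T) :
  s != [::] -> exists2 c0, c0 \in s & forall c, c \in s -> f c0 <= f c.
Proof.
elim: s => [//|a s IH] _.
case: (eqVneq s [::]) => [->|/IH [b hb hmin]].
  exists a => [|c]; first by rewrite inE.
  by rewrite inE => /eqP ->; lra.
case: (Rle_dec (f a) (f b)) => hab.
  exists a => [|c]; first by rewrite inE eqxx.
  rewrite inE => /orP [/eqP ->|/hmin]; lra.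
exists b => [|c]; first by rewrite inE hb orbT.
rewrite inE => /orP [/eqP ->|/hmin]; lra.
Qed.

Definition Nr (C : finType) (B : {set C} -> nat) (D : {set C}) : R :=
  \big[Rplus/R0]_(y : {set C} | y :&: D != set0) INR (B y).

Lemma sumR_minus (I : finType) (P : pred I) (f g : I -> R) :
  \big[Rplus/R0]_(i | P i) (f i - g i) =
  \big[Rplus/R0]_(i | P i) f i - \big[Rplus/R0]_(i | P i) g i.
Proof.
rewrite /Rminus big_split /=; congr (_ + _); symmetry.
apply: (big_morph Ropp) => [x y|]; [exact: Ropp_plus_distr|exact: Ropp_0].
Qed.

Lemma sumR_plus (I : finType) (P : pred I) (f g : I -> R) :
  \big[Rplus/R0]_(i | P i) (f i + g i) =
  \big[Rplus/R0]_(i | P i) f i + \big[Rplus/R0]_(i | P i) g i.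
Proof. by rewrite big_split. Qed.

Lemma flow_le_B (C : finType) B A F y (c : C) : inFam B A F -> c \in A -> F y c <= INR (B y).
Proof.
case=> h0 [hz hs] cA.
case cy: (c \in y); last by rewrite hz ?cy //; apply: pos_INR.
have ne : A :&: y != set0 by apply/set0Pn; exists c; rewrite inE cA cy.
rewrite -(hs y ne) (bigD1 c) /=; last by rewrite inE cA cy.
have : 0 <= \big[Rplus/R0]_(i in A :&: y | i != c) F y i.
  apply: sumR_ge0 => i /andP []; rewrite inE => /andP [iA _] _; exact: h0.
lra.
Qed.

Lemma supp_le_tot (C : finType) B A F (c : C) : inFam B A F -> c \in A ->
  Supp F c <= \big[Rplus/R0]_(y : {set C}) INR (B y).
Proof. move=> hF cA; apply: sumR_le => y _; exact: flow_le_B hF cA. Qed.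

Lemma maxMin_ub (C : finType) B A F (c0 : C) : inFam B A F -> c0 \in A ->
  (forall c, c \in A -> Supp F c0 <= Supp F c) -> Supp F c0 <= maxMin B A.
Proof.
move=> hF c0A hmin.
rewrite /maxMin /Rsup.
set E := (fun m : R => exists _ : {set C} -> C -> R, _).
have hE : E (Supp F c0).
  rewrite /E /=; exists F. split => //; split; [exists c0|] => //.
have hlub : exists m, is_lub E m.
  have hb : bound E.
    exists (\big[Rplus/R0]_(y : {set C}) INR (B y)) => x [G [hG [[c cA ->] _]]].
    exact: supp_le_tot hG cA.
  have [m hm] := completeness E hb (ex_intro _ _ hE).
  by exists m.
case: (epsilon_spec (inhabits R0) _ hlub) => ub _; exact: ub.
Qed.

Inductive reach (C : finType) (A : {set C}) (F : {set C} -> C -> R) (x : C) : C -> Prop :=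
| reach0 : reach A F x x
| reachS z' (y : {set C}) z : reach A F x z' -> z' \in y -> z \in A -> 0 < F y z -> reach A F x z.

Lemma reach_in (C : finType) (A : {set C}) F (x z : C) : x \in A -> reach A F x z -> z \in A.
Proof. by move=> xA; elim. Qed.

Definition dlt (C : finType) (w x : C) : R := if w == x then 1 else 0.

Lemma dlt_rng (C : finType) (w x : C) e : 0 <= e -> 0 <= e * dlt w x <= e.
Proof. rewrite /dlt; case: eqP => _ he; split; lra. Qed.

Lemma sum_dlt (C : finType) (S : {set C}) (z : C) a : z \in S ->
  \big[Rplus/R0]_(w in S) (a * dlt w z) = a.
Proof.
move=> zS; rewrite (bigD1 z) //= /dlt eqxx big1 => [|w /andP [_ /negbTE ->]]; ring.
Qed.

Lemma shift (C : finType) B (A : {set C}) F (x z : C) : inFam B A F -> x \in A -> reach A F x z ->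
  exists2 e0, 0 < e0 & exists K, 0 <= K /\ forall e, 0 < e -> e <= e0 ->
   exists F', inFam B A F' /\
     (forall w, Supp F' w = Supp F w + e * dlt w x - e * dlt w z) /\
     (forall y w, F y w - K * e <= F' y w).
Proof.
move=> hF xA; elim=> [|u y v hr IH uy vA Fpos].
  exists 1; first lra. exists 0; split; first lra.
  move=> e _ _; exists F; split => //; split => [w|y w]; lra.
have uA := reach_in xA hr.
have vy : v \in y.
  case: hF => _ [hv _]; apply: contraT => /hv h; move: Fpos; rewrite h //; lra.
case: IH => e0 e0p [K [K0 hK]].
exists (Rmin e0 (F y v / (K + 1))).
  apply: Rmin_pos => //; apply: Rdiv_lt_0_compat; lra.
exists (K + 1); split; first lra.
move=> e ep ele.
have ee0 : e <= e0 by apply: Rle_trans ele (Rmin_l _ _).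
have eK : e * (K + 1) <= F y v.
  have h1 := Rmin_r e0 (F y v / (K+1)).
  have h2 : e <= F y v / (K + 1) by lra.
  apply (Rmult_le_compat_r (K+1)) in h2; last lra.
  rewrite /Rdiv Rmult_assoc Rinv_l in h2; lra.
case: (hK e ep ee0) => F' [[h0 [hv hs]] [hS hlow]].
pose F'' := fun y0 w => F' y0 w + (if y0 == y then e * dlt w u - e * dlt w v else 0).
exists F''; split; [split; [|split]|split].
- move=> y0 w wA; rewrite /F''; case: eqP => [->|_]; last by (have := h0 y0 w wA; lra).
  case: (eqVneq w v) => [->|wnv].
    have := hlow y v; have := h0 y v vA; have := dlt_rng v u (Rlt_le _ _ ep).
    rewrite /dlt eqxx => ? ? ?; nra.
  have := h0 y w wA; have := dlt_rng w u (Rlt_le _ _ ep).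
  rewrite /dlt (negbTE wnv) => ? ?; lra.
- move=> y0 w wA wy0; rewrite /F'' hv //; case: eqP => [ey|]; last by lra.
  subst y0; rewrite /dlt; have -> : (w == u) = false.
    by apply/negbTE; apply: contraNneq wy0 => ->.
  have -> : (w == v) = false by apply/negbTE; apply: contraNneq wy0 => ->.
  lra.
- move=> y0 ne; rewrite /F'' sumR_plus hs //; case: eqP => [ey|_].
    subst y0; rewrite sumR_minus !sum_dlt ?inE ?uA ?uy ?vA ?vy //; lra.
  rewrite big1 //; lra.
- move=> w; rewrite /Supp /F'' sumR_plus.
  rewrite (sumR_pred1 (P := predT) (fun _ => e * dlt w u - e * dlt w v)) //.
  rewrite -/(Supp F' w) hS -/(Supp F w); lra.
- move=> y0 w; rewrite /F''.
  have := hlow y0 w; have := dlt_rng w u (Rlt_le _ _ ep); have := dlt_rng w v (Rlt_le _ _ ep).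
  case: eqP => _ ? ? ?; nra.
Qed.

Definition reachSet (C : finType) (A : {set C}) F (x : C) : {set C} :=
  [set z | if excluded_middle_informative (reach A F x z) then true else false].

Lemma in_reachSet (C : finType) (A : {set C}) F (x z : C) :
  z \in reachSet A F x <-> reach A F x z.
Proof. by rewrite inE; case: excluded_middle_informative. Qed.

Lemma reachSet_sub (C : finType) (A : {set C}) F (x : C) : x \in A ->
  reachSet A F x \subset A.
Proof. move=> xA; apply/subsetP => z /in_reachSet; exact: reach_in. Qed.

Lemma sum_supp_le_N (C : finType) B (A : {set C}) F (D : {set C}) : inFam B A F -> D \subset A ->
  \big[Rplus/R0]_(z in D) Supp F z <= Nr B D.
Proof.
move=> hF DA; have [h0 [hz hs]] := hF.
rewrite /Supp exchange_big /Nr [X in _ <= X]big_mkcond /=.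
apply: sumR_le => y _; case: ifP => [ne|].
  have Ane : A :&: y != set0.
    case/set0Pn: ne => w; rewrite !inE => /andP [wy wD].
    by apply/set0Pn; exists w; rewrite inE (subsetP DA _ wD) wy.
  rewrite -(hs y Ane) (bigID (fun z => z \in y)) /=.
  rewrite [X in _ + X <= _]big1 => [|w /andP [wD wy]]; last by rewrite hz // (subsetP DA _ wD).
  rewrite Rplus_0_r; apply: sumR_sub => [w /andP [wD wy]|w]; first by rewrite inE (subsetP DA _ wD).
  by rewrite inE => /andP [wA _]; apply: h0.
move/negbFE/eqP => e.
rewrite big1 => [|w wD]; first lra.
apply: hz; first exact: (subsetP DA _ wD).
apply/negP => wy; have : w \in y :&: D by rewrite inE wy.
by rewrite e inE.
Qed.

Lemma closure_sum (C : finType) B (A : {set C}) F (x : C) : inFam B A F -> x \in A ->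
  Nr B (reachSet A F x) <= \big[Rplus/R0]_(z in reachSet A F x) Supp F z.
Proof.
move=> hF xA; have [h0 [hz hs]] := hF.
set D := reachSet A F x.
have DA : D \subset A by exact: reachSet_sub.
rewrite /Supp exchange_big /Nr big_mkcond /=.
apply: sumR_le => y _; case: ifP => [ne|_]; last first.
  apply: sumR_ge0 => w wD; apply: h0; exact: (subsetP DA _ wD).
have [z1] := set0Pn _ ne; rewrite in_setI => /andP [z1y z1D].
have Ane : A :&: y != set0 by apply/set0Pn; exists z1; rewrite inE (subsetP DA _ z1D) z1y.
rewrite -(hs y Ane) (bigID (fun w => w \in D)) /=.
rewrite [X in _ + X <= _]big1 => [|w /andP [] ]; last first.
  rewrite inE => /andP [wA wy] wD.
  case: (Rle_lt_or_eq_dec _ _ (h0 y w wA)) => [hpos|<-] //.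
  have : reach A F x w.
    apply: (@reachS _ A F x z1 y w) => //; exact/in_reachSet.
  by move/in_reachSet; rewrite (negbTE wD).
rewrite Rplus_0_r; apply: sumR_sub => [w /andP [] //|w wD].
apply: h0; exact: (subsetP DA _ wD).
Qed.

Lemma improve (C : finType) B (A : {set C}) F mu : inFam B A F ->
  (forall x, x \in A -> mu <= Supp F x) ->
  (forall D : {set C}, D \subset A -> D != set0 -> mu * INR #|D| < Nr B D) ->
  exists F', inFam B A F' /\ forall x, x \in A -> mu < Supp F' x.
Proof.
move=> hF hmu hD.
pose L (G : {set C} -> C -> R) :=
  [set x in A | if Rlt_dec mu (Supp G x) then false else true].
have inL : forall G x, x \in L G <-> x \in A /\ ~ mu < Supp G x.
  move=> G x; rewrite inE; case: (Rlt_dec _ _) => h /=.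
    by rewrite andbF; split=> // [[_ hn]]; case: (hn h).
  by rewrite andbT; split=> [->|[]] //.
suff : forall n G, (#|L G| <= n)%N -> inFam B A G -> (forall x, x \in A -> mu <= Supp G x) ->
  exists F', inFam B A F' /\ forall x, x \in A -> mu < Supp F' x.
  by move=> h; apply: (h _ F (leqnn _)).
elim=> [|n IH] G hn hG hmuG; (case: (set_0Vmem (L G)) => [L0 | [x0 x0L]]).
- exists G; split => // x xA; apply: Rnot_le_lt => hle.
  have : x \in L G by apply/inL; split => //; lra.
  by rewrite L0 inE.
- have : (0 < #|L G|)%N by apply/card_gt0P; exists x0.
  by rewrite leqn0 in hn; rewrite (eqP hn).
- exists G; split => // x xA; apply: Rnot_le_lt => hle.
  have : x \in L G by apply/inL; split => //; lra.
  by rewrite L0 inE.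
have [x0A x0n] := (inL G x0).1 x0L.
have x0mu : Supp G x0 = mu by have := hmuG x0 x0A; lra.
set D := reachSet A G x0.
have DA : D \subset A by exact: reachSet_sub.
have x0D : x0 \in D by apply/in_reachSet; constructor.
have Dn : D != set0 by apply/set0Pn; exists x0.
have hND := hD D DA Dn.
have hcl : Nr B D <= \big[Rplus/R0]_(z in D) Supp G z := closure_sum hG x0A.
have [z zD zgt] : exists2 z, z \in D & mu < Supp G z.
  apply: NNPP => hno.
  have : \big[Rplus/R0]_(z in D) Supp G z <= \big[Rplus/R0]_(z in D) mu.
    apply: sumR_le => z zD; apply: Rnot_lt_le => h; apply: hno; by exists z.
  rewrite sumR_const -/D; lra.
have zr : reach A G x0 z by apply/in_reachSet.
have [e0 e0p [K [K0 hK]]] := shift hG x0A zr.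
set e := Rmin e0 ((Supp G z - mu) / 2).
have ep : 0 < e by apply: Rmin_pos => //; lra.
have ele : e <= e0 by apply: Rmin_l.
have ele2 : e <= (Supp G z - mu) / 2 by apply: Rmin_r.
have [F' [hF' [hS _]]] := hK e ep ele.
have zx0 : z != x0 by apply/eqP => ezx; move: zgt; rewrite ezx; lra.
have S'x0 : Supp F' x0 = mu + e.
  rewrite hS /dlt eqxx eq_sym (negbTE zx0) x0mu; ring.
have S'z : Supp F' z = Supp G z - e.
  rewrite hS /dlt eqxx (negbTE zx0); ring.
have S'w : forall w, w != x0 -> w != z -> Supp F' w = Supp G w.
  by move=> w h1 h2; rewrite hS /dlt (negbTE h1) (negbTE h2); ring.
apply: (IH F') => //; last first.
  move=> w wA; case: (eqVneq w x0) => [->|h1]; first by rewrite S'x0; lra.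
  case: (eqVneq w z) => [->|h2]; first by rewrite S'z; lra.
  by rewrite S'w //; apply: hmuG.
have sub : L F' \subset L G :\ x0.
  apply/subsetP => w /inL [wA wn]; rewrite in_setD1; apply/andP; split.
    by apply/eqP => ew; apply: wn; rewrite ew S'x0; lra.
  apply/inL; split => // hlt.
  case: (eqVneq w x0) => [ew|h1]; first by apply: wn; rewrite ew S'x0; lra.
  case: (eqVneq w z) => [ew|h2]; first by apply: wn; rewrite ew S'z; lra.
  by apply: wn; rewrite S'w.
have h := subset_leq_card sub.
move: hn; rewrite (cardsD1 x0 (L G)) x0L add1n ltnS => hn; exact: leq_trans h hn.
Qed.

Lemma tight (C : finType) B (A : {set C}) F : inFam B A F -> A != set0 ->
  (forall x, x \in A -> maxMin B A <= Supp F x) ->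
  exists D : {set C}, [/\ D \subset A, D != set0 & Nr B D <= maxMin B A * INR #|D|].
Proof.
move=> hF An hmu.
apply: NNPP => hno.
have hD : forall D : {set C}, D \subset A -> D != set0 -> maxMin B A * INR #|D| < Nr B D.
  move=> D DA Dn; apply: Rnot_le_lt => hle; apply: hno; by exists D; split.
case: (improve hF hmu hD) => F' [hF' hlt].
have [x xA] := set0Pn _ An.
have ne : enum A != [::].
  by apply/eqP => e; move: xA; rewrite -mem_enum e.
have [c0 c0A hmin] := exists_min (Supp F') ne.
rewrite mem_enum in c0A.
have hmin' : forall c, c \in A -> Supp F' c0 <= Supp F' c.
  by move=> c cA; apply: hmin; rewrite mem_enum.
have := maxMin_ub hF' c0A hmin'.
have := hlt c0 c0A; lra.
Qed.

Lemma Nr_ge0 (C : finType) B (D : {set C}) : 0 <= Nr B D.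
Proof. apply: sumR_ge0 => y _; exact: pos_INR. Qed.

Lemma card_pos_INR (C : finType) (D : {set C}) : D != set0 -> 0 < INR #|D|.
Proof.
move=> Dn; apply: lt_0_INR; apply/ltP; rewrite card_gt0 //.
Qed.

Theorem lemma5 (V C : finType) (S : nat) (B : {set C} -> nat)
  (hS : (1 <= S <= #|C|)%N)
  (hB : (\sum_(A : {set C}) B A <= #|V|)%N)
  (ws : seq C) (hrun : ODH_run B S ws)
  (i : nat) (hi : (i < S)%N)
  (c : C) (hc : c \notin Ce ws i)
  (Y : {set {set C}}) (hY : forall y, y \in Y -> c \in y) :
  Rle (Rdiv (INR (\sum_(y in Y) B y)%N)
            (INR (#|Ce ws i :&: \bigcup_(y in Y) y| + 1)%N))
      (maxMin B (c |: Ce ws i)).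
Proof.
have [hsz hrun'] := hrun.
set T := INR (\sum_(y in Y) B y)%N.
set U := \bigcup_(y in Y) y.
set k := #|Ce ws i :&: U|.
set t := T / INR (k + 1).
have kpos : 0 < INR (k + 1) by apply: lt_0_INR; apply/ltP; rewrite addn1.
have T0 : 0 <= T by apply: pos_INR.
have t0 : 0 <= t by rewrite /t /Rdiv; apply: Rmult_le_pos => //; apply: Rlt_le; apply: Rinv_0_lt_compat.
have Tt : T = t * INR (k + 1) by rewrite /t; field; lra.
have Cmono : forall j, (j <= i)%N -> Ce ws j \subset Ce ws i.
  move=> j hj; apply/subsetP => x; rewrite !inE => xj.
  have xs := mem_take xj.
  rewrite in_take //; exact: leq_trans (index_ltn xj) hj.
have Csucc : forall j, (j < S)%N -> Ce ws j.+1 = nth c ws j |: Ce ws j.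
  move=> j hj; apply/setP => x; rewrite /Ce (take_nth c); last by rewrite hsz.
  by rewrite !inE mem_rcons in_cons.
have cAn : forall j, c |: Ce ws j != set0 by move=> j; apply/set0Pn; exists c; rewrite setU11.
have MofH : forall j, (j <= i)%N ->
    (forall D : {set C}, D \subset Ce ws j -> t * INR #|D| <= Nr B D) ->
    t <= maxMin B (c |: Ce ws j).
  move=> j hj HJ.
  have cn : c \notin Ce ws j by apply: contra hc; exact: (subsetP (Cmono j hj) c).
  have jS : (j < S)%N := leq_ltn_trans hj hi.
  have [s [hs _]] := hrun' j jS.
  have [Fc [[hFc optc] _]] := hs c cn.
  have [D [DA Dn hND]] := tight hFc (cAn j) optc.
  have Dpos := card_pos_INR Dn.
  suff : t * INR #|D| <= Nr B D.
    move=> h; apply: (Rmult_le_reg_r (INR #|D|)) => //; lra.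
  case cD: (c \in D); last first.
    apply: HJ; apply/subsetP => x xD; have := subsetP DA x xD.
    rewrite in_setU1 => /orP [/eqP ex|//]; by move: cD; rewrite -ex xD.
  set D2 := D :\: (c |: U).
  have D2C : D2 \subset Ce ws j.
    apply/subsetP => x; rewrite in_setD in_setU1 negb_or => /andP [/andP [xc _] xD].
    by have := subsetP DA x xD; rewrite in_setU1 (negbTE xc).
  have hcard : (#|D| <= k + 1 + #|D2|)%N.
    have sub : D \subset ([set c] :|: (Ce ws i :&: U)) :|: D2.
      apply/subsetP => x xD; rewrite !in_setU in_set1.
      case: (eqVneq x c) => [//|xc] /=.
      case xU: (x \in U); last by rewrite /D2 in_setD in_setU1 (negbTE xc) xU xD orbT.
      have := subsetP DA x xD; rewrite in_setU1 (negbTE xc) /= => xj.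
      by rewrite in_setI (subsetP (Cmono j hj) x xj) xU.
    apply: leq_trans (subset_leq_card sub) _.
    apply: leq_trans (leq_card_setU _ _).1 _; rewrite leq_add2r.
    apply: leq_trans (leq_card_setU _ _).1 _; rewrite cards1 addnC leq_add2l //.
  have hcardR : INR #|D| <= INR (k + 1) + INR #|D2|.
    rewrite -plus_INR; apply: le_INR; exact/leP.
  have hN : T + Nr B D2 <= Nr B D.
    rewrite /Nr [X in _ <= X](bigID (fun y => y \in Y)) /=.
    have -> : \big[Rplus/R0]_(y | (y :&: D != set0) && (y \in Y)) INR (B y) = T.
      rewrite /T sumR_INR; apply: eq_bigl => y.
      case yY: (y \in Y); rewrite ?andbT ?andbF //.
      by apply/set0Pn; exists c; rewrite inE hY // cD.
    apply: Rplus_le_compat_l; apply: sumR_sub => [y|y _]; last exact: pos_INR.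
    case/set0Pn => x; rewrite in_setI => /andP [xy].
    rewrite /D2 in_setD in_setU1 negb_or => /andP [/andP [_ xU] xD].
    apply/andP; split; first by apply/set0Pn; exists x; rewrite in_setI xy.
    apply: contra xU => yY; apply/bigcupP; by exists y.
  have := HJ D2 D2C.
  have := Rmult_le_compat_l t _ _ t0 hcardR.
  lra.
have H : forall j, (j <= i)%N -> forall D : {set C}, D \subset Ce ws j -> t * INR #|D| <= Nr B D.
  elim => [|j IH] hj D DC.
    have : #|D| = 0%N.
      apply/eqP; rewrite cards_eq0; apply/eqP/setP => x; rewrite inE.
      apply/negP => xD; have := subsetP DC x xD; by rewrite inE take0.
    move=> ->; have := Nr_ge0 B D; rewrite /= Rmult_0_r; lra.
  have jS : (j < S)%N := ltn_trans hj hi.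
  have hj' : (j <= i)%N := ltnW hj.
  have IHj := IH hj'.
  set m := nth c ws j.
  have [s [hs hw]] := hrun' j jS.
  have [mn hmax] := hw c.
  have cn : c \notin Ce ws j by apply: contra hc; exact: (subsetP (Cmono j hj') c).
  have [Fc [[hFc optc] sc]] := hs c cn.
  have [Fm [[hFm optm] sm]] := hs m mn.
  have tM := MofH j hj' IHj.
  have hsm : t <= Supp Fm m.
    have := hmax c cn; have := optc c (setU11 _ _); rewrite -sc -sm -/m; lra.
  have mAn : m |: Ce ws j != set0 by apply/set0Pn; exists m; rewrite setU11.
  set mu := maxMin B (m |: Ce ws j).
  have tmu : t <= mu.
    apply: Rnot_lt_le => hlt.
    have [Dm [DmA Dmn hNm]] := tight hFm mAn optm.
    have Dpos := card_pos_INR Dmn.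
    have hsum := sum_supp_le_N hFm DmA.
    case mD: (m \in Dm).
      rewrite (bigD1 m) //= in hsum.
      have e1 : mu * INR #|Dm| = mu + \big[Rplus/R0]_(x in Dm | x != m) mu.
        by rewrite -sumR_const (bigD1 m).
      have : \big[Rplus/R0]_(x in Dm | x != m) mu <= \big[Rplus/R0]_(x in Dm | x != m) Supp Fm x.
        apply: sumR_le => x /andP [xD _]; apply: optm; exact: (subsetP DmA x xD).
      rewrite -/mu in hNm; lra.
    have DmC : Dm \subset Ce ws j.
      apply/subsetP => x xD; have := subsetP DmA x xD.
      rewrite in_setU1 => /orP [/eqP ex|//]; by move: mD; rewrite -ex xD.
    have := IHj Dm DmC.
    have := Rmult_lt_compat_r (INR #|Dm|) _ _ Dpos hlt.
    rewrite -/mu in hNm; lra.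
  rewrite (Csucc j jS) -/m in DC.
  have := sum_supp_le_N hFm DC.
  have : \big[Rplus/R0]_(x in D) mu <= \big[Rplus/R0]_(x in D) Supp Fm x.
    apply: sumR_le => x xD; apply: optm; exact: (subsetP DC x xD).
  rewrite sumR_const.
  have := Rmult_le_compat_r (INR #|D|) _ _ (pos_INR _) tmu.
  lra.
rewrite -/T -/U -/k; exact: (MofH i (leqnn i) (H i (leqnn i))).
Qed.
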